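(* Let $\rho>0$, $\alpha>0$, $\beta>0$, let $P=(p_1,\dots,p_n)$ be a path and $Q=(q_1,\dots,q_m)$ a walk in $G$, and let $\pi:[n']\to[n]$ be the index map of the $\beta$-compression of $P$, with the conventions $\pi(0)=0$ and $\pi(n'+1)=n+1$. For every $i\in[n']$ and $j\in[m]$, if $M^\beta_\rho[\pi(i),j]=-1$, then $M^\beta_\rho[x,j]\neq 1$ (i.e. $M^\beta_\rho[x,j]\le 0$) for all integers $x$ with $\pi(i-1)<x<\pi(i+1)$.
   Context: $G$ is a planar graph with positive integer edge weights and shortest-path distance $d$. $\tilde d$ is any function (''perceived distance'', e.g. given by a $(1+\alpha)$-stretch distance oracle) with $d(u,v)\le\tilde d(u,v)\le(1+\alpha)d(u,v)$ for all vertices $u,v$. The approximate free-space matrix $M^\beta_\rho$ is the $n\times m$ matrix with $M^\beta_\rho[i,j]=-1$ if $\tilde d(p_i,q_j)\le(1+\alpha)\rho$, $M^\beta_\rho[i,j]=1$ if $\tilde d(p_i,q_j)>(1+\alpha)(1+\alpha+\beta)\rho$, and $0$ otherwise. The length of $P[p_s,p_t]$ ($s\le t$) is the total weight of the edges of $P$ between positions $s$ and $t$. $\beta$-compression: let $S=\{1\}$ and anchor $c=1$; scanning $x=c+1,c+2,\dots$, the first $x$ with length of $P[p_c,p_x]\ge\beta\rho$ is added to $S$ and becomes the new anchor, and scanning continues; then for each $s\in S$ with $s>1$ also add $s-1$; finally add $n$. Let $n'$ be the size of the resulting index set and $\pi:[n']\to[n]$ its increasing enumeration; $P^\beta=(p_{\pi(1)},\dots,p_{\pi(n')})$.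 *)

(* Defs.v *)
From mathcomp Require Import all_boot all_order all_algebra.
Set Implicit Arguments. Unset Strict Implicit. Unset Printing Implicit Defensive.
Import Order.TTheory GRing.Theory Num.Theory.
Local Open Scope ring_scope.

Section Defs.
Variable V : finType.

Definition weighted_graph (e : rel V) (w : V -> V -> nat) : Prop :=
  [/\ symmetric e, irreflexive e,
      (forall u v, e u v -> (0 < w u v)%N) &
      (forall u v, e u v -> w u v = w v u)].

Definition is_walk (e : rel V) (s : seq V) : bool :=
  if s is x :: s' then path e x s' else true.
Definition is_path (e : rel V) (s : seq V) : bool := is_walk e s && uniq s.

Definition walk_weight (w : V -> V -> nat) (u : V) (s : seq V) : nat :=
  sumn (pairmap w u s).

Definition is_sp_dist (e : rel V) (w : V -> V -> nat) (d : V -> V -> nat) : Prop :=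
  forall u v,
    (exists s, [/\ path e u s, last u s = v & walk_weight w u s = d u v]) /\
    (forall s, path e u s -> last u s = v -> (d u v <= walk_weight w u s)%N).

Variable R : realFieldType.

(* 1-based indexing of a sequence: pt v0 P i = p_i (v0 an irrelevant default). *)
Definition pt (v0 : V) (P : seq V) (i : nat) : V := nth v0 P i.-1.

Definition plen (w : V -> V -> nat) (v0 : V) (P : seq V) (s t : nat) : R :=
  \sum_(s <= k < t) ((w (pt v0 P k) (pt v0 P k.+1))%:R : R).

Section Compression.
Variables (w : V -> V -> nat) (v0 : V) (P : seq V) (beta rho : R).
Let n := size P.

Definition next_anchor (c : nat) : option nat :=
  ohead [seq x <- iota c.+1 (n - c) | beta * rho <= plen w v0 P c x].

Fixpoint anchors_from (fuel c : nat) : seq nat :=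
  if fuel is fuel'.+1 then
    if next_anchor c is Some x then x :: anchors_from fuel' x else [::]
  else [::].

Definition anchors : seq nat := 1%N :: anchors_from n 1.

Definition kept (x : nat) : bool :=
  [|| x \in anchors, ((x.+1 \in anchors) && (0 < x)%N) | x == n].

Definition comp_idx : seq nat := [seq x <- iota 1 n | kept x].

Definition comp_size : nat := size comp_idx.

Definition comp_pi (i : nat) : nat :=
  if i == 0%N then 0%N
  else if (i <= comp_size)%N then nth 0%N comp_idx i.-1
  else n.+1.
End Compression.

Definition Mentry (dt : V -> V -> R) (alpha beta rho : R) (u v : V) : int :=
  if dt u v <= (1 + alpha) * rho then (-1)%R
  else if (1 + alpha) * (1 + alpha + beta) * rho < dt u v then 1%R
  else 0%R.

Definition Mmat (dt : V -> V -> R) (alpha beta rho : R) (v0 : V)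
    (P Q : seq V) (i j : nat) : int :=
  Mentry dt alpha beta rho (pt v0 P i) (pt v0 Q j).

End Defs.

(* Main.v *)
Require Import Defs.
From mathcomp Require Import all_boot all_order all_algebra.
From mathcomp Require Import zify lra.
Import Order.TTheory GRing.Theory Num.Theory.
Set Implicit Arguments. Unset Strict Implicit.

Section G.
Variables (V : finType) (e : rel V) (w : V -> V -> nat).

Lemma ww_cat u s1 s2 : walk_weight w u (s1 ++ s2) =
  walk_weight w u s1 + walk_weight w (last u s1) s2.
Proof. by rewrite /walk_weight pairmap_cat sumn_cat. Qed.

Lemma rev_walk : symmetric e -> (forall u v, e u v -> w u v = w v u) ->
  forall s u, path e u s -> exists t, [/\ path e (last u s) t, last (last u s) t = u &
     walk_weight w (last u s) t = walk_weight w u s].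
Proof.
move=> sym ws; elim=> [|y s IH] u /=.
  by move=> _; exists [::].
case/andP=> euy ps; have [t [pt lt wt]] := IH y ps.
exists (rcons t u); rewrite rcons_path pt lt last_rcons sym euy; split=> //.
by rewrite -cats1 ww_cat wt lt /walk_weight /= addn0 (ws _ _ euy) addnC.
Qed.

Variable d : V -> V -> nat.
Hypothesis hd : is_sp_dist e w d.

Lemma d_tri u m v : d u v <= d u m + d m v.
Proof.
have [[s1 [p1 l1 w1]] _] := hd u m; have [[s2 [p2 l2 w2]] _] := hd m v.
have [_ H] := hd u v.
have := H (s1 ++ s2); rewrite cat_path p1 l1 p2 last_cat l1 l2 => /(_ isT erefl).
by rewrite ww_cat l1 w1 w2.
Qed.

Lemma d_sym : symmetric e -> (forall u v, e u v -> w u v = w v u) ->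
  forall u v, d u v <= d v u.
Proof.
move=> sym ws u v; have [[s [p l ws1]] _] := hd v u.
have [t [pt lt wt]] := rev_walk sym ws p.
rewrite l in pt lt wt; have [_ H] := hd u v.
by have := H t pt lt; rewrite wt ws1.
Qed.
End G.

Section G2.
Variables (V : finType) (e : rel V) (w : V -> V -> nat) (v0 : V) (P : seq V).

Lemma walk_edge : is_walk e P -> forall k, 0 < k -> k < size P ->
  e (pt v0 P k) (pt v0 P k.+1).
Proof.
case: P => [|p0 P'] //= /(pathP v0) H k k0 kn.
rewrite /pt /=; case: k k0 kn => [|k] //= _ kn.
exact: (H k kn).
Qed.

Lemma subwalk : is_walk e P -> forall a m, 0 < a -> a + m <= size P ->
  exists s, [/\ path e (pt v0 P a) s, last (pt v0 P a) s = pt v0 P (a + m) &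
    walk_weight w (pt v0 P a) s = \sum_(a <= k < a + m) w (pt v0 P k) (pt v0 P k.+1)].
Proof.
move=> hw a; elim=> [|m IH] a0 am.
  by exists [::]; rewrite addn0 big_geq.
have am' : a + m <= size P by lia.
have [s [ps ls ws]] := IH a0 am'.
exists (rcons s (pt v0 P (a + m).+1)); rewrite rcons_path ps ls last_rcons addnS.
rewrite walk_edge //; last by rewrite -addnS; lia.
split=> //.
rewrite -cats1 ww_cat ws ls big_nat_recr /=; last by lia.
  by rewrite /walk_weight /= addn0.
lia.
Qed.
End G2.

Lemma ohead_iota (p : pred nat) m k :
 match ohead [seq x <- iota m k | p x] with
 | Some y => [/\ m <= y < m + k, p y & forall z, m <= z < y -> ~~ p z]
 | None => forall z, m <= z < m + k -> ~~ p z end.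
Proof.
elim: k m => [|k IH] m /=.
  by move=> z; lia.
case: ifP => pm /=.
  split=> //; [lia| move=> z; lia].
have := IH m.+1; case: (ohead _) => [y [H1 H2 H3]|H].
  split=> //; first lia.
  move=> z hz; have [->|ne] := eqVneq z m; first by rewrite pm.
  apply: H3; lia.
move=> z hz; have [->|ne] := eqVneq z m; first by rewrite pm.
apply: H; lia.
Qed.

Section C.
Variables (V : finType) (R : realFieldType) (w : V -> V -> nat) (v0 : V) (P : seq V)
  (beta rho : R).
Local Notation n := (size P).
Local Notation pl := (plen R w v0 P).
Local Notation K := (comp_idx w v0 P beta rho).
Local Notation pi := (comp_pi w v0 P beta rho).
Local Notation n' := (comp_size w v0 P beta rho).
Local Notation af := (anchors_from w v0 P beta rho).

Lemma anchors_gap fuel c : n <= c + fuel -> forall a b, c <= a -> a <= b -> b <= n ->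
 (forall y, y \in c :: af fuel c -> ~~ (a < y <= b)) ->
 exists cc, [/\ cc \in c :: af fuel c, cc <= a &
   forall y, cc < y <= b -> (pl cc y < beta * rho)%R].
Proof.
elim: fuel c => [|f IH] c hn a b ca ab bn H.
  exists c; split=> //; first exact: mem_head.
  by move=> y; lia.
have OH : match next_anchor w v0 P beta rho c with
 | Some y => [/\ c.+1 <= y < c.+1 + (n - c), (beta * rho <= pl c y)%R &
     forall z, c.+1 <= z < y -> ~~ (beta * rho <= pl c z)%R]
 | None => forall z, c.+1 <= z < c.+1 + (n - c) -> ~~ (beta * rho <= pl c z)%R end
  := ohead_iota _ _ _.
have LE : c :: af f.+1 c = c :: (if next_anchor w v0 P beta rho c is Some x then x :: af f x else [::]) by [].
rewrite LE in H *.
move: OH H; case E: (next_anchor w v0 P beta rho c) => [c'|].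
  move=> [H1 H2 H3] H.
  have [ac'|ac'] := ltnP a c'.
    exists c; split=> //; first exact: mem_head.
    move=> y hy; have := H c'; rewrite !inE eqxx orbT => /(_ isT) H4.
    have := H3 y; rewrite -ltNge; apply; lia.
  have [cc [H5 H6 H7]] : exists cc, [/\ cc \in c' :: af f c', cc <= a &
     forall y, cc < y <= b -> (pl cc y < beta * rho)%R].
    apply: IH => //; first lia.
    by move=> y hy; apply: H; rewrite inE hy orbT.
  by exists cc; split=> //; rewrite inE H5 orbT.
move=> H3 H; exists c; split=> //; first exact: mem_head.
move=> y hy; have := H3 y; rewrite -ltNge; apply; lia.
Qed.

Lemma memK k : (k \in K) = kept w v0 P beta rho k && (1 <= k <= n).
Proof. by rewrite /comp_idx mem_filter mem_iota add1n ltnS. Qed.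

Lemma sortedK : sorted ltn K.
Proof. apply: sorted_filter; [exact: ltn_trans | exact: iota_ltn_sorted]. Qed.

Lemma piE i : 1 <= i <= n' -> pi i = nth 0 K i.-1.
Proof. by rewrite /comp_pi; case: i => // i /andP[_ ->]. Qed.

Lemma piK i : 1 <= i <= n' -> pi i \in K.
Proof. move=> hi; rewrite piE // mem_nth //; by case: i hi => //= i /andP[_]. Qed.

Lemma Kbound k : k \in K -> 1 <= k <= n.
Proof. by rewrite memK => /andP[]. Qed.

Lemma pi_mono j1 j2 : j1 < j2 <= n'.+1 -> pi j1 < pi j2.
Proof.
move=> hj.
have [j20|j2n] := leqP j2 n'.
  have h2 : 1 <= j2 <= n' by lia.
  have := Kbound (piK h2).
  have [->|j10] := eqVneq j1 0; first by rewrite /comp_pi /=; lia.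
  move=> _; have h1 : 1 <= j1 <= n' by lia.
  rewrite !piE //; case: j1 j10 h1 hj => // j1 _ h1; case: j2 j20 h2 => // j2 _ h2 hj /=.
  apply: (sorted_ltn_nth ltn_trans); first exact: sortedK.
  1-3: rewrite ?inE /= /comp_size in h1 h2 hj *; lia.
have -> : pi j2 = n.+1.
  rewrite /comp_pi; case: eqP => [e0|_]; first lia.
  by case: leqP => //; lia.
have [->|j10] := eqVneq j1 0; first by rewrite /comp_pi /=.
have h1 : 1 <= j1 <= n' by lia.
by have := Kbound (piK h1); lia.
Qed.

Lemma pi_le j : pi j <= n.+1.
Proof.
have [->|j0] := eqVneq j 0; first by rewrite /comp_pi.
have [jn|jn] := leqP j n'.
  have h : 1 <= j <= n' by lia.
  by have := Kbound (piK h); lia.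
rewrite /comp_pi; case: eqP => // _.
by have -> : (j <= n') = false by rewrite leqNgt jn.
Qed.

Lemma K_pi k : k \in K -> exists t, 1 <= t <= n' /\ pi t = k.
Proof.
move=> hk; have H : index k K < size K by rewrite index_mem.
exists (index k K).+1; split.
  by rewrite /comp_size; lia.
rewrite piE /=; first exact: nth_index.
by rewrite /comp_size; lia.
Qed.

Lemma gap j k : j <= n' -> k \in K -> ~~ (pi j < k < pi j.+1).
Proof.
move=> hj /K_pi [t [ht <-]]; apply/negP => /andP[h1 h2].
have [tj|jt] := leqP t j.
  have [e0|tj'] := eqVneq t j; first by rewrite e0 ltnn in h1.
  have := @pi_mono t j; lia.
have [e0|tj'] := eqVneq t j.+1; first by rewrite e0 ltnn in h2.
have := @pi_mono j.+1 t; lia.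
Qed.
End C.

Local Open Scope ring_scope.

Theorem mainTheorem6 (R : realFieldType) (V : finType) (e : rel V)
    (w : V -> V -> nat) (d : V -> V -> nat) (dt : V -> V -> R)
    (alpha beta rho : R) (P Q : seq V) (v0 : V) :
  weighted_graph e w ->
  is_sp_dist e w d ->
  (forall u v, (d u v)%:R <= dt u v <= (1 + alpha) * (d u v)%:R) ->
  0 < rho -> 0 < alpha -> 0 < beta ->
  is_path e P -> is_walk e Q -> (0 < size P)%N ->
  forall i j : nat,
    (1 <= i <= comp_size w v0 P beta rho)%N ->
    (1 <= j <= size Q)%N ->
    Mmat dt alpha beta rho v0 P Q (comp_pi w v0 P beta rho i) j = -1 ->
    forall x : nat,
      (comp_pi w v0 P beta rho i.-1 < x < comp_pi w v0 P beta rho i.+1)%N ->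
      Mmat dt alpha beta rho v0 P Q x j != 1.
Proof.
move=> [sym irr wpos wsym] hd hdt rho0 al0 be0 /andP[hP _] hQ n0 i j hi hj hM x hx.
set p := comp_pi w v0 P beta rho i.
have hpK := piK hi; have := Kbound hpK; rewrite -/p => hp.
have hxn : (x <= size P)%N.
  by have := pi_le w v0 P beta rho i.+1; lia.
have hx1 : (1 <= x)%N by lia.
set q := pt v0 Q j.
set a := minn x p; set b := maxn x p.
have ha1 : (1 <= a)%N by rewrite /a; lia.
have hab : (a <= b)%N by rewrite /a /b; lia.
have hbn : (b <= size P)%N by rewrite /b; lia.
have noanch : forall y, y \in 1%N :: anchors_from w v0 P beta rho (size P) 1 ->
    ~~ (a < y <= b)%N.
  move=> y hy; apply/negP => /andP[y1 y2].
  have hyk : kept w v0 P beta rho y by rewrite /kept /anchors hy.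
  have [xp|px] := leqP p x.
    have : (y \in comp_idx w v0 P beta rho) by rewrite memK hyk /=;
      rewrite /a /b in y1 y2; lia.
    move/(gap (j := i)) => /(_ _)/negP; apply; first by lia.
    rewrite /a /b in y1 y2; apply/andP; split; lia.
  case: y hy y1 y2 hyk => [|y] hy y1 y2 hyk; first by rewrite /a in y1; lia.
  have hk : kept w v0 P beta rho y.
    rewrite /kept; apply/orP; right; apply/orP; left.
    by rewrite /anchors hy /=; rewrite /a in y1; lia.
  have : (y \in comp_idx w v0 P beta rho) by rewrite memK hk /=;
      rewrite /a /b in y1 y2; lia.
  move/(gap (j := i.-1)) => /(_ _)/negP; apply; first by lia.
  rewrite prednK; last by lia.
  rewrite /a /b in y1 y2; apply/andP; split; rewrite -/p; lia.
have [cc [_ hca hcc]] := anchors_gap (fuel := size P) (c := 1%N) (leq_addl _ _) ha1 hab hbn noanch.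
have plab : plen R w v0 P a b < beta * rho.
  have split_ : plen R w v0 P cc b = plen R w v0 P cc a + plen R w v0 P a b.
    by rewrite /plen (@big_cat_nat _ _ _ a cc b).  
  have ge0 : 0 <= plen R w v0 P cc a by rewrite /plen; apply: sumr_ge0 => k _.
  have [cb|cb] := ltnP cc b.
    have := hcc b; rewrite cb leqnn => /(_ isT); lra.
  have eab : a = b by lia.
  by rewrite eab /plen big_geq // mulr_gt0.
have [s [ps ls ws]] := subwalk w v0 hP ha1 (m := (b - a)%N) (ltac:(lia)).
have ebm : (a + (b - a))%N = b by lia.
rewrite ebm in ls ws.
have dab : (d (pt v0 P a) (pt v0 P b) <= walk_weight w (pt v0 P a) s)%N.
  by have [_ H] := hd (pt v0 P a) (pt v0 P b); apply: H.
have dab' : (d (pt v0 P a) (pt v0 P b))%:R < beta * rho.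
  apply: le_lt_trans plab; rewrite /plen -natr_sum ler_nat -ws.
  exact: dab.
have dxp : (d (pt v0 P x) (pt v0 P p))%:R < beta * rho.
  apply: le_lt_trans dab'; rewrite ler_nat.
  have [xp|px] := leqP p x.
    have -> : a = p by rewrite /a; lia.
    have -> : b = x by rewrite /b; lia.
    exact: d_sym hd sym wsym _ _.
  have -> : a = x by rewrite /a; lia.
  by have -> : b = p by rewrite /b; lia.
have tri := d_tri hd (pt v0 P x) (pt v0 P p) q.
have hdp : (d (pt v0 P p) q)%:R <= (1 + alpha) * rho.
  have := hdt (pt v0 P p) q => /andP[h1 _].
  apply: le_trans h1 _.
  move: hM; rewrite /Mmat /Mentry -/q; case: ifP => // _.
  by case: ifP.
have hX : (d (pt v0 P x) q)%:R <= beta * rho + (1 + alpha) * rho.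
  apply: le_trans (_ : (d (pt v0 P x) (pt v0 P p))%:R + (d (pt v0 P p) q)%:R <= _).
    by rewrite -natrD ler_nat.
  lra.
have := hdt (pt v0 P x) q => /andP[_ h2].
have h3 : (1 + alpha) * (d (pt v0 P x) q)%:R <= (1 + alpha) * (beta * rho + (1 + alpha) * rho).
  apply: ler_wpM2l => //; lra.
rewrite /Mmat /Mentry -/q; case: ifP => // _; case: ifP => // h4.
exfalso; move: h4; rewrite -/q; nra.
Qed.
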